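(* Let $(\frac pq,\frac rs)$ be a Farey pair of order $n$ with $q\ge 2$, let $d=\lfloor n/q\rfloor$, let $\alpha\in(0,1)$, $\beta=1-\alpha$, and let $\phi_\alpha(t)=(t^q-\beta)^d-\alpha^d t^{qd-s}$. If $t_0$ is a multiple root of $\phi_\alpha$, then $t_0^s$ is a real number and $t_0^s\ne 1$.
   Context: $\mathcal{F}_n=\{p/q:0\le p<q\le n,\ \gcd(p,q)=1\}$. A Farey pair of order $n$ is a pair $(\frac pq,\frac rs)$ of elements of $\mathcal{F}_n$ with $\frac pq<\frac rs$ and no element of $\mathcal{F}_n$ strictly between them. $\phi_\alpha$ (the Ito rational function of the pair) is regarded as a rational function of the complex variable $t$. *)

(* Defs.v *)
From HB Require Import structures.
From mathcomp Require Import all_boot all_order all_algebra.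
From mathcomp Require Import complex.
From mathcomp Require Import reals.
Set Implicit Arguments. Unset Strict Implicit. Unset Printing Implicit Defensive.
Import Order.TTheory GRing.Theory Num.Theory.
Local Open Scope ring_scope.

(* Farey pair (p/q, r/s) of order n: both fractions are in F_n (reduced,
   0 <= numerator < denominator <= n), p/q < r/s, and no element of F_n lies
   strictly between them (the coprimality condition on a/b is irrelevant for
   "lies strictly between", since every rational a/b with a<b<=n reduces to an
   element of F_n). *)
Definition farey_pair (n p q r s : nat) : Prop :=
  [/\ (p < q <= n)%N /\ coprime p q, (r < s <= n)%N /\ coprime r s,
      (p%:R / q%:R < r%:R / s%:R :> rat) &
      forall a b : nat, (a < b <= n)%N -> coprime a b ->
        ~ ((p%:R / q%:R < a%:R / b%:R :> rat) /\ (a%:R / b%:R < r%:R / s%:R :> rat))].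

(* phi_alpha(t) = (t^q - beta)^d - alpha^d t^(qd - s), beta = 1 - alpha,
   as a rational function num/den of t with num, den polynomials over C = R[i]:
   if s <= qd it is the polynomial (t^q - beta)^d - alpha^d t^(qd-s) (den = 1);
   if s > qd it is ((t^q - beta)^d t^(s-qd) - alpha^d) / t^(s-qd). *)
Definition phi_num (R : realType) (alpha : R) (q s d : nat) : {poly R[i]} :=
  let a : R[i] := (alpha%:C)%C in
  let b : R[i] := ((1 - alpha)%:C)%C in
  if (s <= q * d)%N then ('X^q - b%:P) ^+ d - (a ^+ d)%:P * 'X^(q * d - s)
  else ('X^q - b%:P) ^+ d * 'X^(s - q * d) - (a ^+ d)%:P.

Definition phi_den (R : realType) (q s d : nat) : {poly R[i]} :=
  'X^(s - q * d).

(* t0 is a multiple root of the rational function num/den: t0 is not a pole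
   (den(t0) <> 0) and t0 is a zero of num of multiplicity at least 2.
   (num and den have no common root, so this is the order of phi at t0.) *)
Definition multiple_root_rat (R : realType) (num den : {poly R[i]}) (t0 : R[i]) :=
  den.[t0] != 0 /\ (('X - t0%:P) ^+ 2 %| num)%R.

(* Main.v *)
Require Import Defs.
From HB Require Import structures.
From mathcomp Require Import all_boot all_order all_algebra.
From mathcomp Require Import complex reals.
From mathcomp Require Import ring lra.
Import Order.TTheory GRing.Theory Num.Theory.
Local Open Scope ring_scope.

Lemma dbl_root (F : fieldType) (p : {poly F}) a :
  ('X - a%:P)^+2 %| p -> p.[a] = 0 /\ ('X * p^`()).[a] = 0.
Proof.
move/dvdpP=> [g ->]; rewrite derivM deriv_exp derivXsubC.
by split; rewrite !hornerE subrr /= ?expr0n /=; ring.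
Qed.

Lemma Xder (F : fieldType) n : 'X * ('X^(n.-1) *+ n) = 'X^n *+ n :> {poly F}.
Proof. case: n => [|n] /=; first by rewrite !mulr0n mulr0.
by rewrite mulrnAr -exprS. Qed.

Lemma idA (F : fieldType) (q d k : nat) (b A : F) :
  'X * (('X^q - b%:P) ^+ d.+1 - A%:P * 'X^k)^`() =
  ('X^q - b%:P) ^+ d * ('X^q *+ q *+ d.+1) - A%:P * 'X^k *+ k.
Proof.
rewrite derivB deriv_exp deriv_mulC derivB derivC derivXn subr0 /=.
have h1 : 'X * ('X^(q.-1) *+ q * ('X^q - b%:P) ^+ d *+ d.+1) =
   ('X^q *+ q) * ('X^q - b%:P) ^+ d *+ d.+1.
  by rewrite -Xder; ring.
have h2 : 'X * (A%:P * ('X^(k.-1) *+ k)) = A%:P * ('X^k *+ k).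
  by rewrite -Xder; ring.
rewrite mulrBr h1 derivXn h2. ring.
Qed.

Lemma idB (F : fieldType) (q d e : nat) (b A : F) :
  'X * (('X^q - b%:P) ^+ d.+1 * 'X^e - A%:P)^`() =
  ('X^q - b%:P) ^+ d * 'X^e * ('X^q *+ q *+ d.+1 + ('X^q - b%:P) *+ e).
Proof.
rewrite derivB derivC subr0 derivM deriv_exp derivB derivC derivXn subr0 /=.
rewrite mulrDr.
have h1 : 'X * ('X^(q.-1) *+ q * ('X^q - b%:P) ^+ d *+ d.+1 * 'X^e) =
   ('X^q *+ q) * ('X^q - b%:P) ^+ d *+ d.+1 * 'X^e.
  by rewrite -Xder; ring.
have h2 : 'X * (('X^q - b%:P) ^+ d.+1 * ('X^(e.-1) *+ e)) =
   ('X^q - b%:P) ^+ d.+1 * ('X^e *+ e).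
  by rewrite -Xder; ring.
rewrite derivXn h1 h2 exprS. ring.
Qed.

Theorem lemma4p1 (R : realType) (n p q r s : nat) (alpha : R) (t0 : R[i]) :
  farey_pair n p q r s -> (2 <= q)%N ->
  0 < alpha < 1 ->
  multiple_root_rat (phi_num alpha q s (n %/ q)) (phi_den R q s (n %/ q)) t0 ->
  t0 ^+ s \is Num.real /\ t0 ^+ s != 1.
Proof.
move=> [[/andP[hpq hqn] _] [/andP[hrs hsn] _] _ _] hq2 /andP[al0 al1] [hden hdvd].
have s0 : (0 < s)%N by apply: leq_ltn_trans hrs.
have d0 : (0 < (n %/ q)%N)%N by rewrite divn_gt0 //; apply: leq_trans hq2.
move: hden hdvd; rewrite /phi_num /phi_den.
move: d0; case: (n %/ q)%N => [//|d'] _.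
set a : R[i] := (alpha%:C)%C; set b : R[i] := ((1 - alpha)%:C)%C.
have a0 : 0 < a by rewrite /a -[0]/((0:R)%:C)%C ltcR.
have b0 : 0 < b by rewrite /b -[0]/((0:R)%:C)%C ltcR subr_gt0.
have b1 : b < 1 by rewrite /b -(rmorph1 (real_complex R)) ltcR ltrBlDr ltrDl.
have ab : a + b = 1 by rewrite /a /b -(rmorph1 (real_complex R)) -rmorphD addrC subrK.
have ar : a \is Num.real by apply/complex_realP; exists alpha.
have br : b \is Num.real by apply/complex_realP; exists (1 - alpha).
clearbody a b.
have [->|t0n] := eqVneq t0 0.
  by rewrite expr0n; case: (s) s0 => // s1 _ _ _; rewrite /= mulr0n; split; [apply: rpred0 | rewrite eq_sym oner_eq0].
set d := d'.+1.
set u := t0 ^+ q.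
set A := a ^+ d.
have A0 : A != 0 by rewrite expf_neq0 // gt_eqF.
case: ifP => hs.
  set k := (q * d - s)%N => _ hdvd.
  have [E0 E1] := dbl_root _ _ _ hdvd.
  rewrite idA in E1.
  rewrite !hornerE !hornerMn !hornerE -/u in E0 E1.
  have E0' : A * t0 ^+ k = (u - b) ^+ d by rewrite (subr0_eq E0).
  rewrite E0' in E1.
  have key : (u - b) ^+ d' * (u *+ (q * d) - (u - b) *+ k) = 0.
    by rewrite -E1 mulrnA /d exprS; ring.
  have ub : u != b.
    apply/eqP=> ub; move: E0'; rewrite ub subrr expr0n /= => /eqP.
    by rewrite mulf_eq0 (negbTE A0) expf_eq0 (negbTE t0n) andbF.
  move/eqP: key; rewrite mulf_eq0 expf_eq0 subr_eq0 (negbTE ub) andbF /= => /eqP key.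
  have qdE : (q * d = s + k)%N by rewrite subnKC.
  have hu : u *+ s = - (b *+ k).
    by apply/eqP; rewrite -subr_eq0 -key qdE mulrnDr; apply/eqP; ring.
  have sR0 : (s%:R : R[i]) != 0 by rewrite pnatr_eq0 -lt0n.
  have uE : u = (b *- k) / s%:R by rewrite -hu -mulr_natr mulfK.
  have ur : u \is Num.real.
    by rewrite uE; apply: rpredM; [rewrite rpredN; apply: rpredMn | rewrite rpredV; apply: realn].
  have tk0 : t0 ^+ k != 0 by rewrite expf_neq0.
  have tkE : t0 ^+ k = A^-1 * (u - b) ^+ d by rewrite -E0' mulKf.
  have tsE : t0 ^+ s = u ^+ d / t0 ^+ k by rewrite -exprM qdE exprD mulfK.
  split.
    rewrite tsE tkE; apply: rpredM; first by apply: rpredX.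
    rewrite rpredV; apply: rpredM; first by rewrite rpredV; apply: rpredX.
    by apply: rpredX; apply: rpredB.
  apply/eqP=> ts1.
  have nt : `|t0| = 1.
    apply/eqP; rewrite -(pexpr_eq1 s0) ?normr_ge0 // -normrX ts1 normr1 //.
  have nu : `|u| = 1 by rewrite /u normrX nt expr1n.
  have nk : b *+ k = s%:R.
    move: (congr1 Num.norm hu); rewrite normrMn nu normrN normrMn gtr0_norm //.
  have um1 : u = -1 by rewrite uE nk mulNr divff.
  move: (congr1 Num.norm E0'); rewrite normrM (normrX k t0) nt expr1n mulr1 /A normrX.
  rewrite um1 -opprD normrX normrN !gtr0_norm ?addr_gt0 ?ltr01 // => /eqP.
  rewrite eq_le => /andP[_] h.
  have hlt : a ^+ d < (1 + b) ^+ d.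
    by rewrite ltrXn2r ?ltW // -ab -addrA ltrDl addr_gt0.
  by have := le_lt_trans h hlt; rewrite ltxx.
set e := (s - q * d)%N => _ hdvd.
have [E0 E1] := dbl_root _ _ _ hdvd.
rewrite idB in E1.
rewrite !hornerE !hornerMn !hornerE -/u in E0 E1.
have E0' : (u - b) ^+ d * t0 ^+ e = A by rewrite (subr0_eq E0).
have ub : u != b.
  apply/eqP=> ub; move: E0'; rewrite ub subrr expr0n /= mul0r => /esym/eqP.
  by rewrite (negbTE A0).
move/eqP: E1; rewrite !mulf_eq0 !expf_eq0 subr_eq0 (negbTE ub) (negbTE t0n) !andbF /= => /eqP key.
have qdE : (s = q * d + e)%N by rewrite subnKC // ltnW // ltnNge hs.
have e0 : (0 < e)%N by rewrite subn_gt0 ltnNge hs.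
have hu : u *+ s = b *+ e.
  by apply/eqP; rewrite -subr_eq0 -key qdE mulrnDr mulrnA /d; apply/eqP; ring.
have sR0 : (s%:R : R[i]) != 0 by rewrite pnatr_eq0 -lt0n.
have uE : u = (b *+ e) / s%:R by rewrite -hu -mulr_natr mulfK.
have ur : u \is Num.real.
  by rewrite uE; apply: rpredM; [apply: rpredMn | rewrite rpredV; apply: realn].
have ud0 : (u - b) ^+ d != 0 by rewrite expf_neq0 // subr_eq0.
have teE : t0 ^+ e = ((u - b) ^+ d)^-1 * A by rewrite -E0' mulKf.
have tsE : t0 ^+ s = u ^+ d * t0 ^+ e by rewrite qdE exprD exprM.
split.
  rewrite tsE teE; apply: rpredM; first by apply: rpredX.
  apply: rpredM; last by apply: rpredX.
  by rewrite rpredV; apply: rpredX; apply: rpredB.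
apply/eqP=> ts1.
have nt : `|t0| = 1.
  apply/eqP; rewrite -(pexpr_eq1 s0) ?normr_ge0 // -normrX ts1 normr1 //.
have nu : `|u| = 1 by rewrite /u normrX nt expr1n.
have nk : s%:R = b *+ e.
  move: (congr1 Num.norm hu); rewrite normrMn nu normrMn gtr0_norm //.
have h1 : b * e%:R < 1 * e%:R by rewrite ltr_pM2r // ltr0n.
rewrite mulr_natr mul1r in h1.
have h2 : (e%:R : R[i]) <= s%:R by rewrite ler_nat qdE leq_addl.
by have := lt_le_trans h1 h2; rewrite nk ltxx.
Qed.
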